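(* Let $f:\mathbb{R}^n\to\mathbb{R}\cup\{+\infty\}$ be a polyhedral M-convex function with bounded $\operatorname{dom}_{\mathbb{R}} f$, and $y\in\operatorname{dom}_{\mathbb{R}} f$ with $\phi_{\mathbb{R}}(y)<0$. Let $i\in N$ satisfy $f'_{\mathbb{R}}(y;i,j)>\phi_{\mathbb{R}}(y)$ for all $j\in N\setminus\{i\}$, let $h,k\in N$ be distinct with $f'_{\mathbb{R}}(y;h,k)=\phi_{\mathbb{R}}(y)$, and let $0<\lambda\le\bar c_{\mathbb{R}}(y;h,k)$. Then $\hat y:=y+\lambda(\chi_h-\chi_k)$ satisfies $f'_{\mathbb{R}}(\hat y;i,j)>\phi_{\mathbb{R}}(y)$ for every $j\in N\setminus\{i\}$.
   Context: $N=\{1,\dots,n\}$; $\chi_i$ is the $i$-th unit vector. $\operatorname{dom}_{\mathbb{R}} f=\{x\in\mathbb{R}^n:f(x)<+\infty\}$. A polyhedral convex function $f:\mathbb{R}^n\to\mathbb{R}\cup\{+\infty\}$ (epigraph a polyhedron, $\operatorname{dom}_{\mathbb{R}} f\neq\emptyset$) is M-convex if for all $x,y\in\operatorname{dom}_{\mathbb{R}} f$ and every $i$ with $x(i)>y(i)$ there exist $j$ with $x(j)<y(j)$ and $\epsilon_0>0$ such that $f(x)+f(y)\ge f(x-\epsilon(\chi_i-\chi_j))+f(y+\epsilon(\chi_i-\chi_j))$ for all $\epsilon\in[0,\epsilon_0]$. For $x\in\operatorname{dom}_{\mathbb{R}} f$, $f'_{\mathbb{R}}(x;i,j)=\lim_{\alpha\downarrow0}(f(x+\alpha(\chi_i-\chi_j))-f(x))/\alpha$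 (possibly $+\infty$), $\phi_{\mathbb{R}}(x)=\min_{i,j\in N}f'_{\mathbb{R}}(x;i,j)$, and for finite $f'_{\mathbb{R}}(x;i,j)$, $\bar c_{\mathbb{R}}(x;i,j)=\max\{\lambda\ge0: f(x+\lambda(\chi_i-\chi_j))-f(x)=\lambda f'_{\mathbb{R}}(x;i,j)\}$. *)

(* Defs.v *)
From HB Require Import structures.
From mathcomp Require Import all_boot all_order all_algebra.
From mathcomp Require Import all_classical all_reals all_analysis.
Set Implicit Arguments. Unset Strict Implicit. Unset Printing Implicit Defensive.
Import Order.TTheory GRing.Theory Num.Theory.
Local Open Scope ring_scope.
Local Open Scope classical_set_scope.

Section Defs.
Variables (R : realType) (n : nat).
Implicit Types (f : 'rV[R]_n -> \bar R) (x y : 'rV[R]_n) (i j : 'I_n).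

Definition chi i : 'rV[R]_n := delta_mx 0 i.

Definition dom f x : Prop := (f x < +oo)%E.

(* polyhedral convex function R^n -> R \cup {+oo}: never -oo, nonempty domain,
   and the epigraph {(x,t) | f x <= t} is a polyhedron, i.e. a finite
   intersection of closed half-spaces of R^n x R. *)
Definition polyhedral_convex f : Prop :=
  [/\ (forall x, f x != -oo%E), (exists x, dom f x) &
      exists (m : nat) (A : 'I_m -> 'rV[R]_n) (b c : 'I_m -> R),
        forall x (t : R), (f x <= t%:E)%E <->
          (forall l, \sum_(p < n) A l 0 p * x 0 p + b l * t <= c l)].

Definition M_convex f : Prop :=
  forall x y, dom f x -> dom f y -> forall i, y 0 i < x 0 i ->
    exists j, x 0 j < y 0 j /\
      exists2 eps0 : R, 0 < eps0 &
        forall eps : R, 0 <= eps <= eps0 ->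
          (f (x - eps *: (chi i - chi j))%R + f (y + eps *: (chi i - chi j))%R
             <= f x + f y)%E.

Definition dom_bounded f : Prop :=
  exists M : R, forall x, dom f x -> forall p, `|x 0 p| <= M.

Definition ddir f x i j : \bar R :=
  lim ((fun a : R => ((f (x + a *: (chi i - chi j))%R - f x) * (a^-1)%:E)%E) @ 0^'+).

Definition phi f x : \bar R :=
  \big[Order.min/+oo%E]_(i < n) \big[Order.min/+oo%E]_(j < n) ddir f x i j.

(* cbar_R(x; i, j) = max {lam >= 0 | f(x + lam(chi_i - chi_j)) - f x = lam f'_R(x;i,j)},
   rendered as the supremum (which is the maximum whenever the maximum exists). *)
Definition cbar f x i j : \bar R :=
  ereal_sup [set lam%:E | lam in [set lam : R | 0 <= lam /\
     (f (x + lam *: (chi i - chi j))%R - f x = lam%:E * ddir f x i j)%E]].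

End Defs.
Arguments chi {R n} i.

(* Main.v *)
Require Import Defs.
From HB Require Import structures.
From mathcomp Require Import all_boot all_order all_algebra.
From mathcomp Require Import all_classical all_reals all_analysis.
From mathcomp Require Import ring lra.
Import Order.TTheory GRing.Theory Num.Theory.
Import numFieldNormedType.Exports.
Local Open Scope ring_scope.
Local Open Scope classical_set_scope.

Lemma sumc (R : realType) n (I : Type) (r : seq I) (P : pred I) (h : I -> 'rV[R]_n -> R) :
  (forall i, continuous (h i)) -> continuous (fun z => \sum_(i <- r | P i) h i z).
Proof.
move=> hc; elim: r => [|a r IH].
  under eq_fun do rewrite big_nil. exact: cst_continuous.
under eq_fun do rewrite big_cons.
case: (P a); last exact: IH.
move=> z; apply: continuousD; [exact: hc | exact: IH].
Qed.

Lemma maxc (R : realType) n (I : Type) (r : seq I) (P : pred I) (d : 'rV[R]_n -> R) (h : I -> 'rV[R]_n -> R) :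
  continuous d -> (forall i, continuous (h i)) -> continuous (fun z => \big[Num.max/d z]_(i <- r | P i) h i z).
Proof.
move=> dc hc; elim: r => [|a r IH].
  by under eq_fun do rewrite big_nil.
under eq_fun do rewrite big_cons.
case: (P a); last exact: IH.
move=> z; apply: continuous_max; [exact: hc | exact: IH].
Qed.

Lemma lin_cont (R : realType) n (w : 'I_n -> R) :
  continuous (fun z : 'rV[R]_n => \sum_(p < n) w p * z 0 p).
Proof.
apply: (@sumc _ _ _ _ _ (fun p z => w p * z 0 p)) => p z.
apply: (@continuousM _ _ (fun=> w p) (fun z : 'rV[R]_n => z 0 p)).
  exact: cst_continuous.
exact: coord_continuous.
Qed.


Section S.
Variables (R : realType) (n : nat) (f : 'rV[R]_n -> \bar R).
Hypothesis Hninf : forall x, f x != -oo%E.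
Variables (m : nat) (A : 'I_m -> 'rV[R]_n) (b c : 'I_m -> R).
Hypothesis H : forall x (t : R), (f x <= t%:E)%E <->
          (forall l, \sum_(p < n) A l 0 p * x 0 p + b l * t <= c l).

Local Notation F z := (fine (f z)).

Lemma fin_dom {x} : dom f x -> f x = (F x)%:E.
Proof. by move: (Hninf x); rewrite /dom; case: (f x). Qed.

Lemma ndom_oo {x} : ~ dom f x -> f x = +oo%E.
Proof. by rewrite /dom ltey => /negP; rewrite negbK => /eqP. Qed.

Lemma dom_le {x u} : (f x <= u%:E)%E -> dom f x.
Proof. by move=> h; rewrite /dom (le_lt_trans h) ?ltry. Qed.

Lemma cons_at {x} : dom f x -> forall l,
  \sum_(p < n) A l 0 p * x 0 p + b l * F x <= c l.
Proof. by move=> dx; apply/H; rewrite -fin_dom. Qed.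

Lemma conv x z t : dom f x -> dom f z -> 0 <= t <= 1 ->
  (f ((1 - t) *: x + t *: z) <= ((1 - t) * F x + t * F z)%:E)%E.
Proof.
move=> dx dz /andP[t0 t1].
apply/H => l.
have hx := cons_at dx l.
have hz := cons_at dz l.
have -> : \sum_(p < n) A l 0 p * ((1 - t) *: x + t *: z) 0 p =
   (1 - t) * (\sum_(p < n) A l 0 p * x 0 p) + t * \sum_(p < n) A l 0 p * z 0 p.
  by rewrite !mulr_sumr -big_split; apply: eq_bigr => p _ /=; rewrite !mxE; ring.
nra.
Qed.

Definition q x e s := ((f (x + s *: e) - f x) * (s^-1)%:E)%E.

Lemma q_ndom {x e s} : dom f x -> ~ dom f (x + s *: e) -> 0 < s -> q x e s = +oo%E.
Proof.
move=> dx nd s0; rewrite /q (fin_dom dx) (ndom_oo nd).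
by rewrite /= mulyr gtr0_sg ?invr_gt0 // mul1e.
Qed.

Lemma q_dom {x e s} : dom f x -> dom f (x + s *: e) ->
  q x e s = ((F (x + s *: e) - F x) / s)%:E.
Proof. by move=> dx ds; rewrite /q (fin_dom dx) (fin_dom ds). Qed.

Lemma q_mono x e s t : dom f x -> 0 < s -> s <= t -> (q x e s <= q x e t)%E.
Proof.
move=> dx s0 st; have t0 : 0 < t by apply: lt_le_trans st.
have [dt|ndt] := pselect (dom f (x + t *: e)); last first.
  by rewrite (q_ndom dx ndt t0) leey.
have hc := @conv x _ (s / t) dx dt.
have eqv : (1 - s / t) *: x + s / t *: (x + t *: e) = x + s *: e.
  by rewrite scalerDr scalerA divfK ?gt_eqF // addrA -scalerDl subrK scale1r.
rewrite eqv in hc.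
have /hc hc' : 0 <= s / t <= 1.
  by apply/andP; split; [rewrite divr_ge0 // ltW | rewrite ler_pdivrMr // mul1r].
have ds := dom_le hc'.
rewrite (q_dom dx ds) (q_dom dx dt) lee_fin.
rewrite (fin_dom ds) lee_fin in hc'.
rewrite ler_pdivrMr // .
have -> : (F (x + t *: e) - F x) / t * s = s / t * (F (x + t *: e) - F x) by ring.
lra.
Qed.

Lemma ddir_inf x a b' : dom f x -> ddir f x a b' =
  ereal_inf (q x (chi a - chi b') @` [set` Interval (BRight 0) (BInfty R false)]).
Proof.
move=> dx; rewrite /ddir; apply: cvg_lim => //.
apply: (@nondecreasing_at_right_cvge _ (q x (chi a - chi b'))) => //.
move=> s t; rewrite !in_itv /= !andbT => s0 t0 st; exact: q_mono.
Qed.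

Lemma ddir_le_q x a b' s : dom f x -> 0 < s ->
  (ddir f x a b' <= q x (chi a - chi b') s)%E.
Proof.
move=> dx s0; rewrite ddir_inf //; apply: ereal_inf_lbound; exists s => //.
by rewrite /= in_itv /= s0.
Qed.

Lemma ddir_lt x a b' u : dom f x -> (ddir f x a b' < u)%E ->
  exists2 s0, 0 < s0 & forall s, 0 < s <= s0 -> (q x (chi a - chi b') s < u)%E.
Proof.
move=> dx; rewrite ddir_inf // => /ereal_inf_lt [_ [s0 Hs0 <-] Hu].
move: Hs0; rewrite /= in_itv /= andbT => s00.
exists s0 => // s /andP[s1 ss0]; apply: le_lt_trans Hu; exact: q_mono.
Qed.

Lemma tight {x} : dom f x -> exists2 l, b l < 0 &
  \sum_(p < n) A l 0 p * x 0 p + b l * F x = c l.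
Proof.
move=> dx; apply: contrapT => Hn.
have Hl : forall l, b l < 0 -> \sum_(p < n) A l 0 p * x 0 p + b l * F x < c l.
  move=> l bl; rewrite lt_neqAle cons_at // andbT; apply/eqP => E; apply: Hn.
  by exists l.
pose T l := (c l - \sum_(p < n) A l 0 p * x 0 p - b l * F x) / (- b l).
pose eps := \big[Order.min/1]_(l | b l < 0) T l.
have eps0 : 0 < eps.
  apply: lt_bigmin => // l bl; apply: divr_gt0; last by rewrite oppr_gt0.
  by have := Hl l bl; lra.
have : (f x <= (F x - eps)%:E)%E.
  apply/H => l; have hx := cons_at dx l.
  have [bl|bl] := ltP (b l) 0; last by nra.
  have : eps <= T l by rewrite /eps (bigD1 l) //= ge_min lexx.
  rewrite /T ler_pdivlMr ?oppr_gt0 //; nra.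
by rewrite (fin_dom dx) lee_fin; lra.
Qed.

Lemma ddir_gtNy x a b' : dom f x -> (-oo < ddir f x a b')%E.
Proof.
move=> dx; have [l bl hl] := tight dx.
pose e : 'rV[R]_n := chi a - chi b'.
pose S := \sum_(p < n) A l 0 p * e 0 p.
pose K := - S / b l.
apply: (@lt_le_trans _ _ K%:E); first by rewrite ltNyr.
rewrite ddir_inf //; apply: le_ereal_inf_tmp => _ [s Hs <-].
move: Hs; rewrite /= in_itv /= andbT => s0.
have [ds|nds] := pselect (dom f (x + s *: e)); last first.
  by rewrite (q_ndom dx nds s0) leey.
rewrite (q_dom dx ds) lee_fin ler_pdivlMr //.
have h1 := cons_at ds l.
have E1 : \sum_(p < n) A l 0 p * (x + s *: e) 0 p =
   \sum_(p < n) A l 0 p * x 0 p + s * S.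
  by rewrite /S mulr_sumr -big_split; apply: eq_bigr => p _ /=; rewrite !mxE; ring.
rewrite E1 in h1.
have hK : K * b l = - S by rewrite /K divfK ?lt_eqF.
nra.
Qed.

Variable l0 : 'I_m.
Hypothesis Hl0 : b l0 < 0.
Hypothesis Hx0 : exists x0, dom f x0.

Definition tl l (z : 'rV[R]_n) := (c l - \sum_(p < n) A l 0 p * z 0 p) / b l.
Definition g (z : 'rV[R]_n) := \big[Num.max/tl l0 z]_(l | b l < 0) tl l z.

Lemma tl_le z l : dom f z -> b l < 0 -> tl l z <= F z.
Proof. move=> dz bl; have h := cons_at dz l; rewrite /tl ler_ndivrMr //; lra. Qed.

Lemma g_eq z : dom f z -> g z = F z.
Proof.
move=> dz; apply/eqP; rewrite eq_le; apply/andP; split.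
  by apply: bigmax_le; [exact: tl_le | move=> l bl; exact: tl_le].
have [l bl hl] := tight dz.
have -> : F z = tl l z by rewrite /tl -hl; field; rewrite lt_eqF.
exact: (le_bigmax_cond _ _ bl).
Qed.

Lemma b_le0 l : b l <= 0.
Proof.
case: Hx0 => x0 dx0; rewrite leNgt; apply/negP => bl.
pose u := (c l - \sum_(p < n) A l 0 p * x0 0 p) / b l.
have hu : u * b l = c l - \sum_(p < n) A l 0 p * x0 0 p by rewrite /u divfK ?gt_eqF.
pose t := Num.max (F x0) (u + 1).
have h1 : F x0 <= t by rewrite le_max lexx.
have h2 : u + 1 <= t by rewrite le_max lexx orbT.
have h3 : (f x0 <= t%:E)%E by rewrite (fin_dom dx0) lee_fin.
have := proj1 (H x0 t) h3 l.
nra.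
Qed.

Lemma dom_iff z : dom f z <-> (forall l, b l = 0 -> \sum_(p < n) A l 0 p * z 0 p <= c l).
Proof.
split=> [dz l bl|hz].
  by have := cons_at dz l; rewrite bl mul0r addr0.
apply: (@dom_le _ (g z)); apply/H => l.
case: (ltgtP (b l) 0) => bl.
- have h1 : tl l z <= g z by exact: (le_bigmax_cond _ _ bl).
  have h2 : tl l z * b l = c l - \sum_(p < n) A l 0 p * z 0 p by rewrite /tl divfK ?lt_eqF.
  nra.
- by have := b_le0 l; rewrite leNgt bl.
- by rewrite bl mul0r addr0; exact: hz.
Qed.

Lemma dom_closed : closed (dom f).
Proof.
have -> : dom f = \bigcap_(l in [set l | b l = 0])
    [set z | \sum_(p < n) A l 0 p * z 0 p <= c l].
  apply/seteqP; split => z /=.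
    by move/dom_iff => h l /= bl; exact: h.
  by move=> h; apply/dom_iff => l bl; exact: h.
apply: closed_bigI => l _.
apply: (@preimage_closed _ _ (fun z : 'rV[R]_n => \sum_(p < n) A l 0 p * z 0 p)
   [set x | x <= c l]); last exact: closed_le.
by move=> z _; exact: lin_cont.
Qed.

Lemma g_cont : continuous g.
Proof.
have tc : forall l, continuous (tl l).
  move=> l z; rewrite /tl.
  apply: (@continuousM _ _ (fun z : 'rV[R]_n => c l - \sum_(p < n) A l 0 p * z 0 p) (fun=> (b l)^-1)).
    apply: continuousB; first exact: cst_continuous.
    exact: lin_cont.
  exact: cst_continuous.
exact: maxc.
Qed.

Lemma chiE (a p : 'I_n) : (chi a : 'rV[R]_n) 0 p = (a == p)%:R.
Proof. by rewrite /chi mxE eqxx /= eq_sym. Qed.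

Lemma sum_dom {u v : \bar R} {r : R} : u != -oo%E -> v != -oo%E -> (u + v <= r%:E)%E ->
  (u < +oo)%E /\ (v < +oo)%E.
Proof. by case: u => [u||]; case: v => [v||] //= _ _; rewrite ?ltry. Qed.

Section LP.
Hypothesis HM : M_convex f.
Hypothesis Hbdd : dom_bounded f.
Variables (y : 'rV[R]_n) (i : 'I_n) (phi0 theta : R).
Hypothesis Dy : dom f y.
Hypothesis Hs1 : forall a b' s, 0 < s -> dom f (y + s *: (chi a - chi b')) ->
  F y + s * phi0 <= F (y + s *: (chi a - chi b')).
Hypothesis Hs2 : forall b' s, b' != i -> 0 < s -> dom f (y + s *: (chi i - chi b')) ->
  F y + s * theta <= F (y + s *: (chi i - chi b')).

Definition Sp (z : 'rV[R]_n) := \sum_(p < n) Num.max (z 0 p - y 0 p) 0.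
Definition Mi (z : 'rV[R]_n) := Num.max (z 0 i - y 0 i) 0.
Definition Nm (z : 'rV[R]_n) := \sum_(p < n) `|z 0 p - y 0 p|.

Lemma coordE (z : 'rV[R]_n) (a j : 'I_n) (d : R) (p : 'I_n) :
  (z - d *: (chi a - chi j)) 0 p - y 0 p =
  (z 0 p - y 0 p) - d * ((a == p)%:R - (j == p)%:R).
Proof. by rewrite !mxE /= (eq_sym p a) (eq_sym p j) addrAC. Qed.

Lemma sum_ind (a : 'I_n) (d : R) : \sum_(p < n) (if p == a then d else 0) = d.
Proof. by rewrite -big_mkcond /= big_pred1_eq. Qed.

Section Step.
Variables (z : 'rV[R]_n) (a j : 'I_n) (d : R).
Hypotheses (aj : a != j) (d0 : 0 <= d) (da : d <= z 0 a - y 0 a) (dj : d <= y 0 j - z 0 j).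

Lemma Sp_step : Sp (z - d *: (chi a - chi j)) = Sp z - d.
Proof.
have d0' := d0; have da' := da; have dj' := dj.
rewrite /Sp; have -> : \sum_(p < n) Num.max (z 0 p - y 0 p) 0 - d =
  \sum_(p < n) (Num.max (z 0 p - y 0 p) 0 - (if p == a then d else 0)).
  by rewrite sumrB sum_ind.
apply: eq_bigr => p _.
rewrite coordE.
have [->|pa] := eqVneq p a.
  rewrite (eq_sym j a) (negbTE aj) /= mulr1n mulr0n subr0 mulr1.
  have h1 : 0 <= z 0 a - y 0 a - d by lra.
  have h2 : 0 <= z 0 a - y 0 a by lra.
  by rewrite (max_l h1) (max_l h2).
have [->|pj] := eqVneq p j.
  rewrite /= mulr1n mulr0n sub0r mulrN1 opprK subr0.
  have h1 : z 0 j - y 0 j + d <= 0 by lra.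
  have h2 : z 0 j - y 0 j <= 0 by lra.
  by rewrite (max_r h1) (max_r h2).
by rewrite ?(eq_sym a p) ?(negbTE pa) ?(eq_sym j p) ?(negbTE pj) /= mulr0n subrr mulr0 !subr0.
Qed.

Lemma Nm_step : Nm (z - d *: (chi a - chi j)) = Nm z - d - d.
Proof.
have d0' := d0; have da' := da; have dj' := dj.
rewrite /Nm; have -> : \sum_(p < n) `|z 0 p - y 0 p| - d - d =
  \sum_(p < n) (`|z 0 p - y 0 p| - (if p == a then d else 0) - (if p == j then d else 0)).
  by rewrite !sumrB !sum_ind.
apply: eq_bigr => p _.
rewrite coordE.
have [->|pa] := eqVneq p a.
  rewrite (eq_sym j a) (negbTE aj) /= mulr1n mulr0n !subr0 mulr1.
  have h1 : 0 <= z 0 a - y 0 a - d by lra.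
  have h2 : 0 <= z 0 a - y 0 a by lra.
  by rewrite (ger0_norm h1) (ger0_norm h2).
have [->|pj] := eqVneq p j.
  rewrite /= mulr1n mulr0n sub0r mulrN1 opprK !subr0.
  have h1 : z 0 j - y 0 j + d <= 0 by lra.
  have h2 : z 0 j - y 0 j <= 0 by lra.
  rewrite (ler0_norm h1) (ler0_norm h2); lra.
by rewrite ?(eq_sym a p) ?(negbTE pa) ?(eq_sym j p) ?(negbTE pj) /= mulr0n subrr mulr0 !subr0.
Qed.

Lemma Mi_step : Mi (z - d *: (chi a - chi j)) = Mi z - (if a == i then d else 0).
Proof.
have d0' := d0; have da' := da; have dj' := dj.
rewrite /Mi coordE.
have [<-|ia] := eqVneq a i.
  rewrite (eq_sym j a) (negbTE aj) /= mulr1n mulr0n subr0 mulr1.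
  have h1 : 0 <= z 0 a - y 0 a - d by lra.
  have h2 : 0 <= z 0 a - y 0 a by lra.
  by rewrite (max_l h1) (max_l h2).
have [<-|ij] := eqVneq j i.
  rewrite /= mulr1n mulr0n sub0r mulrN1 opprK subr0.
  have h1 : z 0 j - y 0 j + d <= 0 by lra.
  have h2 : z 0 j - y 0 j <= 0 by lra.
  by rewrite (max_r h1) (max_r h2).
by rewrite ?(negbTE ia) ?(negbTE ij) /= mulr0n subrr mulr0 !subr0.
Qed.
End Step.

Lemma exists_gt {z} : dom f z -> z != y -> exists a, y 0 a < z 0 a.
Proof.
move=> dz zy; apply: contrapT => Hn.
have Hle : forall a, z 0 a <= y 0 a.
  by move=> a; rewrite leNgt; apply/negP => h; apply: Hn; exists a.
have [a ne] : exists a, z 0 a != y 0 a.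
  apply: contrapT => Hm; move/eqP: zy; apply; apply/rowP => a.
  by apply/eqP; apply: contrapT => h; apply: Hm; exists a; apply/negP.
have lt : z 0 a < y 0 a by rewrite lt_neqAle ne Hle.
have [j [hj _]] := HM y z Dy dz a lt.
by move: (Hle j); rewrite leNgt hj.
Qed.

Section Eta.
Variable eta : R.
Hypothesis eta0 : 0 < eta.

Definition Fe z := g z - phi0 * Sp z - (theta - phi0) * Mi z + eta * Nm z.

Lemma step {z} : dom f z -> z != y -> exists2 z', dom f z' & Fe z' < Fe z.
Proof.
have eta0' := eta0.
move=> dz zy; have [a ha] := exists_gt dz zy.
have [j [hj [eps0 eps00 Heps]]] := HM z y dz Dy a ha.
pose d := Num.min eps0 (Num.min (z 0 a - y 0 a) (y 0 j - z 0 j)).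
have d0 : 0 < d by rewrite !lt_min eps00 !subr_gt0 ha hj.
have de : d <= eps0 by rewrite ge_min lexx.
have da : d <= z 0 a - y 0 a by rewrite !ge_min lexx orbT.
have dj : d <= y 0 j - z 0 j by rewrite !ge_min lexx !orbT.
have aj : a != j by apply/eqP => E; move: ha hj; rewrite E => h1 h2; lra.
have := Heps d; rewrite ltW //= de => /(_ isT).
rewrite (fin_dom dz) (fin_dom Dy) -EFinD => hin.
have [dz' dy'] := sum_dom (Hninf _) (Hninf _) hin.
move: hin; rewrite (fin_dom dz') (fin_dom dy') -EFinD lee_fin => hin.
exists (z - d *: (chi a - chi j)) => //.
rewrite /Fe !g_eq // (Sp_step _ _ _ _ aj (ltW d0) da dj) (Nm_step _ _ _ _ aj (ltW d0) da dj) (Mi_step _ _ _ _ aj (ltW d0) da dj).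
have [ai|ai] := eqVneq a i.
  subst a; have ji : j != i by rewrite eq_sym.
  have hs := Hs2 j d ji d0 dy'.
  nra.
have hs := Hs1 a j d d0 dy'.
nra.
Qed.

End Eta.

Lemma dom_bnd : bounded_set (dom f).
Proof.
case: Hbdd => M0 h.
rewrite /bounded_set /bounded_near /=.
exists (Num.max M0 0); split; first exact: num_real.
move=> M hM x Dx /=. rewrite -[X in X <= _]/(mx_norm x) mx_normrE.
have h0 : 0 <= M by apply: le_trans (ltW hM); rewrite le_max lexx orbT.
have h1 : M0 <= M by apply: le_trans (ltW hM); rewrite le_max lexx.
apply: bigmax_le => // -[i' j'] _ /=. rewrite (ord1 i'). have := h x Dx j'. lra.
Qed.

Lemma coordc (p : 'I_n) (r : R) : continuous (fun z : 'rV[R]_n => z 0 p - r).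
Proof.
move=> z; apply: (continuousB (f := fun z : 'rV[R]_n => z 0 p) (g := fun=> r)).
  exact: coord_continuous.
exact: cst_continuous.
Qed.

Lemma Fe_cont eta : continuous (Fe eta).
Proof.
have hmax : forall p : 'I_n, continuous (fun z : 'rV[R]_n => Num.max (z 0 p - y 0 p) 0).
  move=> p z; apply: (@continuous_max _ _ (fun z : 'rV[R]_n => z 0 p - y 0 p) (fun=> 0)).
    exact: coordc.
  exact: cst_continuous.
have hS : continuous Sp by apply: (@sumc _ _ _ _ _ (fun p z => Num.max (z 0 p - y 0 p) 0)).
have hN : continuous Nm.
  apply: (@sumc _ _ _ _ _ (fun p z => `|z 0 p - y 0 p|)) => p z.
  apply: (@continuous_comp _ _ _ (fun z : 'rV[R]_n => z 0 p - y 0 p) Num.norm).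
    exact: coordc.
  exact: norm_continuous.
move=> z.
apply: (continuousD (f := fun z => g z - phi0 * Sp z - (theta - phi0) * Mi z)
   (g := fun z => eta * Nm z)); last first.
  apply: (@continuousM _ _ (fun=> eta) Nm); [exact: cst_continuous | exact: hN].
apply: (continuousB (f := fun z => g z - phi0 * Sp z) (g := fun z => (theta - phi0) * Mi z)); last first.
  apply: (@continuousM _ _ (fun=> theta - phi0) Mi); [exact: cst_continuous | exact: hmax].
apply: (continuousB (f := g) (g := fun z => phi0 * Sp z)); first exact: g_cont.
apply: (@continuousM _ _ (fun=> phi0) Sp); [exact: cst_continuous | exact: hS].
Qed.

Lemma Lprime z : dom f z -> F y + phi0 * Sp z + (theta - phi0) * Mi z <= F z.
Proof.
move=> dz.
have key : forall eta, 0 < eta -> F y <= Fe eta z.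
  move=> eta eta0.
  have cD : compact (dom f) by apply: bounded_closed_compact; [exact: dom_bnd | exact: dom_closed].
  have [zs zsD zmin] := @EVT_min_rV R n (Fe eta) (dom f) (ex_intro _ y Dy) cD (@continuous_subspaceT _ _ (dom f) (Fe eta) (Fe_cont eta)).
  rewrite inE in zsD.
  have [E|ne] := eqVneq zs y.
    have := zmin z (ltac:(by rewrite inE)); rewrite E /Fe g_eq //.
    rewrite /Sp /Mi /Nm.
    under eq_bigr do rewrite subrr max_r // .
    under [X in _ + eta * X]eq_bigr do rewrite subrr normr0.
    by rewrite subrr max_r // big1_eq !mulr0 !subr0 addr0.
  have [z' dz' lt] := step eta eta0 zsD ne.
  by have := zmin z' (ltac:(by rewrite inE)); rewrite leNgt lt.
rewrite -subr_ge0 leNgt; apply/negP => Hlt.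
set X := _ - _ in Hlt.
have N0 : 0 <= Nm z by apply: sumr_ge0 => p _; exact: normr_ge0.
pose eta := - X / (Nm z + 1).
have eta0 : 0 < eta by apply: divr_gt0; lra.
have he : eta * (Nm z + 1) = - X by rewrite /eta divfK //; apply: lt0r_neq0 => //; lra.
have := key eta eta0; rewrite /Fe g_eq // /X.
move=> hk; clearbody eta; rewrite /X in Hlt he; nra.
Qed.

End LP.


Lemma slope_from y a b' v s : dom f y -> (v%:E <= ddir f y a b')%E -> 0 < s ->
  dom f (y + s *: (chi a - chi b')) -> F y + s * v <= F (y + s *: (chi a - chi b')).
Proof.
move=> Dy hv s0 ds.
have := ddir_le_q y a b' s Dy s0; rewrite (q_dom Dy ds) => h.
have := le_trans hv h; rewrite lee_fin ler_pdivlMr // => h2.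
lra.
Qed.

Lemma comb_eq (x e : 'rV[R]_n) s t : t != 0 ->
  (1 - s / t) *: x + s / t *: (x + t *: e) = x + s *: e.
Proof. by move=> t0; rewrite scalerDr scalerA divfK // addrA -scalerDl subrK scale1r. Qed.

Lemma seg_conv y (d : 'rV[R]_n) ph mu nu : dom f y -> 0 <= mu ->
  f (y + mu *: d) = (F y + mu * ph)%:E -> 0 <= nu <= mu ->
  (f (y + nu *: d) <= (F y + nu * ph)%:E)%E.
Proof.
move=> Dy mu0 hmu /andP[nu0 numu].
have [->|nz] := eqVneq nu 0.
  by rewrite scale0r addr0 mul0r addr0 (fin_dom Dy).
have mupos : 0 < mu by rewrite (lt_le_trans _ numu) // lt0r nz nu0.
have dmu : dom f (y + mu *: d) by rewrite /dom hmu ltry.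
have := @conv y _ (nu / mu) Dy dmu.
rewrite comb_eq ?gt_eqF // => /(_ _) h.
have /h : 0 <= nu / mu <= 1.
  by apply/andP; split; [rewrite divr_ge0 // | rewrite ler_pdivrMr // mul1r].
rewrite hmu /= => h2; apply: (le_trans h2); rewrite lee_fin.
have -> : (1 - nu / mu) * F y + nu / mu * (F y + mu * ph) = F y + nu * ph.
  by field; rewrite gt_eqF.
by [].
Qed.

Lemma seg_end y (d : 'rV[R]_n) ph lam : dom f y ->
  (forall eps, 0 < eps -> exists nu, lam - eps < nu <= lam /\
     (f (y + nu *: d) <= (F y + nu * ph)%:E)%E) ->
  (f (y + lam *: d) <= (F y + lam * ph)%:E)%E.
Proof.
move=> Dy hnu; apply/H => l.
pose Sy := \sum_(p < n) A l 0 p * y 0 p.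
pose Sd := \sum_(p < n) A l 0 p * d 0 p.
have lin : forall nu, \sum_(p < n) A l 0 p * (y + nu *: d) 0 p = Sy + nu * Sd.
  by move=> nu; rewrite /Sy /Sd mulr_sumr -big_split; apply: eq_bigr => p _ /=; rewrite !mxE; ring.
rewrite lin leNgt; apply/negP => Hgt.
pose kap := Sd + b l * ph.
pose gap := Sy + lam * Sd + b l * (F y + lam * ph) - c l.
have gap0 : 0 < gap by rewrite /gap; lra.
have k1 : 0 < `|kap| + 1 by apply: ltr_wpDl.
pose eps := gap / (`|kap| + 1).
have eps0 : 0 < eps by apply: divr_gt0.
have he : eps * (`|kap| + 1) = gap by rewrite /eps divfK ?gt_eqF.
have [nu [/andP[h1 h2] h3]] := hnu eps eps0.
have := proj1 (H _ _) h3 l; rewrite lin => h4.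
have hk : kap <= `|kap| := ler_norm kap.
have hk0 : 0 <= `|kap| := normr_ge0 kap.
clearbody eps; move: he h1 h2 h4 hk hk0 gap0 k1; rewrite /gap /kap; clear.
move: (`|_|) => K; nra.
Qed.

Lemma Sp_bound y (al be : R) (a1 b1 c1 d1 : 'I_n) : 0 <= al -> 0 <= be ->
  Sp y (y + al *: (chi a1 - chi b1) + be *: (chi c1 - chi d1)) <= al + be.
Proof.
move=> al0 be0; rewrite /Sp.
have pw : forall (a2 b2 : 'I_n) (ga : R) (p : 'I_n), 0 <= ga ->
    Num.max (ga * ((a2 == p)%:R - (b2 == p)%:R)) 0 <= (if p == a2 then ga else 0).
  move=> a2 b2 ga p ga0.
  have [->|pa] := eqVneq p a2.
    rewrite ?eqxx ge_max ga0 andbT.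
    by case: (b2 == a2); rewrite /= ?mulr1n ?mulr0n ?subrr ?subr0 ?mulr0 ?mulr1.
  rewrite ?(eq_sym a2 p) ?(negbTE pa) /= ge_max lexx andbT mulr0n sub0r mulrN oppr_le0.
  by case: (b2 == p); rewrite /= ?mulr1n ?mulr0n ?mulr1 ?mulr0.
apply: (le_trans (y := \sum_(p < n) ((if p == a1 then al else 0) + (if p == c1 then be else 0)))).
  apply: ler_sum => p _.
  have -> : (y + al *: (chi a1 - chi b1) + be *: (chi c1 - chi d1)) 0 p - y 0 p =
     al * ((a1 == p)%:R - (b1 == p)%:R) + be * ((c1 == p)%:R - (d1 == p)%:R).
    by rewrite !mxE /= (eq_sym p a1) (eq_sym p b1) (eq_sym p c1) (eq_sym p d1); ring.
  apply: (le_trans (y := Num.max (al * ((a1 == p)%:R - (b1 == p)%:R)) 0 +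
                         Num.max (be * ((c1 == p)%:R - (d1 == p)%:R)) 0)).
    rewrite ge_max; apply/andP; split.
      by apply: lerD; rewrite le_max lexx.
    by apply: addr_ge0; rewrite le_max lexx orbT.
  by apply: lerD; apply: pw.
by rewrite big_split /= !sum_ind.
Qed.

Lemma main_sec (HM : M_convex f) (Hbdd : dom_bounded f) (y : 'rV[R]_n) (i h k : 'I_n) (lam : R) :
  dom f y -> (phi f y < 0)%E ->
  (forall j, j != i -> (phi f y < ddir f y i j)%E) ->
  h != k -> ddir f y h k = phi f y ->
  0 < lam -> (lam%:E <= cbar f y h k)%E ->
  forall j, j != i -> (phi f y < ddir f (y + lam *: (chi h - chi k)) i j)%E.
Proof.
move=> Dy phneg Hi hk Hhk lam0 Hlam j ji.
have gt := ddir_gtNy y h k Dy; rewrite Hhk in gt.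
have [ph Eph] : exists ph : R, phi f y = ph%:E.
  by move: phneg gt; case: (phi f y) => [r||] // _ _; exists r.
rewrite Eph in phneg Hi Hhk *; rewrite lte_fin in phneg.
have phle : forall a b', (ph%:E <= ddir f y a b')%E.
  move=> a b'; rewrite -Eph /phi.
  apply: (le_trans (bigmin_le _ a _)); exact: bigmin_le.
have [theta [phth thle]] : exists theta : R, ph < theta /\
    forall b', b' != i -> (theta%:E <= ddir f y i b')%E.
  pose mm := \big[Order.min/+oo%E]_(b' | b' != i) ddir f y i b'.
  have mgt : (ph%:E < mm)%E by apply: lt_bigmin => //; rewrite ltry.
  have mle : forall b', b' != i -> (mm <= ddir f y i b')%E.
    by move=> b' bi; exact: bigmin_le_cond.
  move: mgt mle; case: mm => [r||] // mgt mle.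
    exists ((ph + r) / 2); rewrite lte_fin in mgt; split; first lra.
    move=> b' bi; apply: le_trans (mle b' bi); rewrite lee_fin; lra.
  exists (ph + 1); split; first lra.
  by move=> b' bi; apply: le_trans (mle b' bi); rewrite leey.
have Hs1 : forall a b' s, 0 < s -> dom f (y + s *: (chi a - chi b')) ->
    F y + s * ph <= F (y + s *: (chi a - chi b')).
  by move=> a b' s s0 ds; apply: slope_from.
have Hs2 : forall b' s, b' != i -> 0 < s -> dom f (y + s *: (chi i - chi b')) ->
    F y + s * theta <= F (y + s *: (chi i - chi b')).
  by move=> b' s bi s0 ds; apply: slope_from => //; exact: thle.
have LP := Lprime HM Hbdd y i ph theta Dy Hs1 Hs2.
have ih : i != h.
  apply/negP => /eqP E; move: hk Hhk; rewrite -E => hk Hhk.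
  have := Hi k; rewrite eq_sym hk Hhk.
  by move/(_ isT); rewrite ltxx.
set d := chi h - chi k.
have seg : (f (y + lam *: d) <= (F y + lam * ph)%:E)%E.
  apply: seg_end => // eps eps0.
  have : ((lam - eps)%:E < cbar f y h k)%E.
    by apply: lt_le_trans Hlam; rewrite lte_fin; lra.
  move=> /ereal_sup_gt [_ [mu [mu0 hmu] <-]]; rewrite lte_fin => hlt.
  rewrite Hhk (fin_dom Dy) in hmu.
  have fmu : f (y + mu *: d) = (F y + mu * ph)%:E.
    move: hmu (Hninf (y + mu *: d)); rewrite /d.
    case: (f _) => [r||] //= hr _.
    by move: hr => [] hr; congr EFin; lra.
  exists (Num.min mu lam); split.
    by rewrite lt_min hlt /= ge_min lexx orbT; lra.
  apply: (@seg_conv y d ph mu _ Dy mu0 fmu).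
  rewrite ge_min lexx /= andbT.
  by rewrite le_min mu0 ltW.
have Dyh := dom_le seg.
rewrite ltNge; apply/negP => Hle.
pose eta := Num.min (theta - ph) (- ph).
have eta0 : 0 < eta by rewrite lt_min subr_gt0 phth oppr_gt0.
have etale1 : eta <= theta - ph by rewrite ge_min lexx.
have etale2 : eta <= - ph by rewrite ge_min lexx orbT.
have : (ddir f (y + lam *: d) i j < (ph + eta)%:E)%E.
  by apply: le_lt_trans Hle _; rewrite lte_fin; lra.
move=> /(ddir_lt _ _ _ _ Dyh) [s0 s00 hq].
pose s := Num.min s0 (lam / 2).
have s0' : 0 < s by rewrite lt_min s00 divr_gt0.
have ss0 : s <= s0 by rewrite ge_min lexx.
have slam : s <= lam / 2 by rewrite ge_min lexx orbT.
have := hq s; rewrite s0' ss0 => /(_ isT) hqs.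
have dz : dom f (y + lam *: d + s *: (chi i - chi j)).
  apply: contrapT => nd; move: hqs; rewrite (q_ndom Dyh nd s0').
  by rewrite ltNge leey.
move: hqs; rewrite (q_dom Dyh dz) lte_fin ltr_pdivrMr // => hqs.
rewrite (fin_dom Dyh) lee_fin in seg.
have L := LP _ dz.
have Mi0 : 0 <= Mi y i (y + lam *: d + s *: (chi i - chi j)) by rewrite le_max lexx orbT.
set z := y + lam *: d + s *: (chi i - chi j).
have [ik|ik] := eqVneq i k.
  have zeq : z = y + (lam - s) *: (chi h - chi i) + s *: (chi h - chi j).
    by rewrite /z /d ik; apply/rowP => p; rewrite !mxE; ring.
  have Sb : Sp y z <= lam - s + s by rewrite zeq; apply: Sp_bound; lra.
  have p1 : ph * lam <= ph * Sp y z by nra.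
  have p2 : 0 <= (theta - ph) * Mi y i z by apply: mulr_ge0; lra.
  have p3 : (ph + eta) * s <= 0 by nra.
  lra.
have Sb : Sp y z <= lam + s by rewrite /z /d; apply: Sp_bound; lra.
have Miz : Mi y i z = s.
  rewrite /Mi /z /d !mxE /= eqxx (negbTE ih) (negbTE ik) (eq_sym i j) (negbTE ji) /=.
  rewrite !mulr0n !mulr1n.
  have -> : y 0 i + (lam * (0 - 0)) + s * (1 - 0) - y 0 i = s by ring.
  by rewrite max_l // ltW.
rewrite Miz in L.
have p1 : ph * (lam + s) <= ph * Sp y z by nra.
have p3 : (theta - ph) * s >= eta * s by nra.
lra.
Qed.

End S.

Theorem mainTheorem16 (R : realType) (n : nat) (f : 'rV[R]_n -> \bar R)
  (y : 'rV[R]_n) (i h k : 'I_n) (lam : R) :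
  polyhedral_convex f -> M_convex f -> dom_bounded f ->
  dom f y -> (phi f y < 0)%E ->
  (forall j, j != i -> (phi f y < ddir f y i j)%E) ->
  h != k -> ddir f y h k = phi f y ->
  0 < lam -> (lam%:E <= cbar f y h k)%E ->
  forall j, j != i ->
    (phi f y < ddir f (y + lam *: (chi h - chi k)) i j)%E.
Proof.
move=> [Hninf [x0 dx0] [m [A [b [c H]]]]] HM Hbdd Dy phneg Hi hk Hhk lam0 Hlam.
have [l0 Hl0 _] := tight R n f Hninf m A b c H dx0.
exact: (main_sec R n f Hninf m A b c H l0 Hl0 (ex_intro _ x0 dx0) HM Hbdd y i h k lam
  Dy phneg Hi hk Hhk lam0 Hlam).
Qed.
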